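(* Let $B$ be a finite skew brace, regarded as a q-cycle set via $a\cdot b:=\lambda_{a^-}(b)$ and $a:b:=\delta_{a^-}(b)$, and let $X$ be an indecomposable sub-q-cycle set of $B$. Then: (1) for $x\in X$, we have $B=B(x)$ if and only if $X$ is a transitive cycle base of $B$ and $\langle x\rangle = X$; (2) $B=B(x)$ for all $x\in X$ if and only if $X$ is a transitive cycle base of $B$ and $X$ is irreducible.
   Context: A skew brace is a triple $(B,+,\circ)$ where $(B,+)$ and $(B,\circ)$ are groups and $a\circ(b+c)=a\circ b-a+a\circ c$ for all $a,b,c\in B$; $-a$ and $a^-$ denote the inverses of $a$ in $(B,+)$ and $(B,\circ)$. For $a\in B$ put $\lambda_a(b):=-a+a\circ b$ and $\delta_a(b):=a\circ b-a$. A sub-skew brace is a subset that is a subgroup of both $(B,+)$ and $(B,\circ)$; $B(x)$ denotes the smallest sub-skew brace of $B$ containing $x$. A q-cycle set is a non-empty set $X$ with binary operations $\cdot$ and $:$ such that each map $\sigma_x:y\mapsto x\cdot y$ is bijective and, for all $x,y,z$: $(x\cdot y)\cdot(x\cdot z)=(y:x)\cdot(y\cdot z)$, $(x:y):(x:z)=(y\cdot x):(y:z)$, $(x\cdot y):(x\cdot z)=(y:x)\cdot(y:z)$. Write $\delta_x(y):=x:y$ (for the skew brace $B$, the q-cycle set maps are $\sigma_a=\lambda_{a^-}$ and $\delta_{a^-}$). A sub-q-cycle set is a subset that is again a q-cycle set under the restricted operations (the empty set also counts as one). For $S\subseteq X$, $\langle S\rangle$ is the intersection of all sub-q-cycle sets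 containing $S$, and $\langle x\rangle:=\langle\{x\}\rangle$. $X$ is irreducible if $\emptyset$ and $X$ are its only sub-q-cycle sets. $X$ is indecomposable if there is no partition of $X$ into two nonempty sub-q-cycle sets (for finite $X$ this is equivalent to the group generated by all $\sigma_x,\delta_x$ acting transitively on $X$). A subset $X\subseteq B$ is a cycle base of $B$ if it is a union of orbits of the subgroup of $\mathrm{Sym}(B)$ generated by $\{\lambda_a,\delta_a : a\in B\}$ and it generates $(B,+)$; it is a transitive cycle base if it is a single such orbit. *)

(* Defs.v *)
From mathcomp Require Import all_boot.
Set Implicit Arguments. Unset Strict Implicit. Unset Printing Implicit Defensive.

Record brace_ops (T : finType) := BraceOps {
  badd  : T -> T -> T;
  bopp  : T -> T;
  bzero : T;
  bcirc : T -> T -> T;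
  binv  : T -> T;
  bone  : T
}.

Definition is_group (T : Type) (op : T -> T -> T) (inv : T -> T) (e : T) :=
  [/\ associative op, left_id e op, right_id e op,
      left_inverse e inv op & right_inverse e inv op].

Definition is_skew_brace (T : finType) (B : brace_ops T) :=
  [/\ is_group (badd B) (bopp B) (bzero B),
      is_group (bcirc B) (binv B) (bone B) &
      forall a b c, bcirc B a (badd B b c)
                    = badd B (badd B (bcirc B a b) (bopp B a)) (bcirc B a c)].

Section Brace.
Variables (T : finType) (B : brace_ops T).

Definition blambda (a b : T) : T := badd B (bopp B a) (bcirc B a b).
Definition bdelta (a b : T) : T := badd B (bcirc B a b) (bopp B a).

Definition add_subgroup (S : {set T}) : bool :=
  [&& bzero B \in S,
      [forall a in S, forall b in S, badd B a b \in S] &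
      [forall a in S, bopp B a \in S]].

Definition circ_subgroup (S : {set T}) : bool :=
  [&& bone B \in S,
      [forall a in S, forall b in S, bcirc B a b \in S] &
      [forall a in S, binv B a \in S]].

Definition sub_skew_brace (S : {set T}) : bool :=
  add_subgroup S && circ_subgroup S.

Definition brace_gen (x : T) : {set T} :=
  \bigcap_(S : {set T} | sub_skew_brace S && (x \in S)) S.

Definition add_gen (X : {set T}) : {set T} :=
  \bigcap_(S : {set T} | add_subgroup S && (X \subset S)) S.

(* one step of the action of a generator lambda_a, delta_a (or of its
   inverse) of the subgroup of Sym(B) generated by all lambda_a, delta_a *)
Definition ld_step : rel T := fun x y =>
  [exists a, [|| blambda a x == y, bdelta a x == y,
                 blambda a y == x | bdelta a y == x]].

Definition ld_orbit (x : T) : {set T} := [set y | connect ld_step x y].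

Definition cycle_base (X : {set T}) : Prop :=
  (forall x, x \in X -> ld_orbit x \subset X) /\ add_gen X = setT.

Definition transitive_cycle_base (X : {set T}) : Prop :=
  (exists x, X = ld_orbit x) /\ add_gen X = setT.

Definition bdot (a b : T) : T := blambda (binv B a) b.
Definition bcolon (a b : T) : T := bdelta (binv B a) b.

End Brace.

Section QCycleSet.
Variables (T : finType) (dot colon : T -> T -> T).

(* X (a subset of T) is a q-cycle set under the restricted operations
   (the empty set is allowed, as for sub-q-cycle sets) *)
Definition sub_qcs (X : {set T}) : bool :=
  [&& [forall x in X, forall y in X, (dot x y \in X) && (colon x y \in X)],
      [forall x in X, forall y in X, forall z in X, (dot x y == dot x z) ==> (y == z)],
      [forall x in X, forall y in X, exists z in X, dot x z == y] &
      [forall x in X, forall y in X, forall z in X,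
        [&& dot (dot x y) (dot x z) == dot (colon y x) (dot y z),
            colon (colon x y) (colon x z) == colon (dot y x) (colon y z) &
            colon (dot x y) (dot x z) == dot (colon y x) (colon y z)]]].

Definition qcs_gen (S : {set T}) : {set T} :=
  \bigcap_(Y : {set T} | sub_qcs Y && (S \subset Y)) Y.

(* X (a q-cycle set, hence nonempty) is irreducible: its only
   sub-q-cycle sets are the empty set and X *)
Definition qcs_irreducible (X : {set T}) : Prop :=
  X != set0 /\
  forall Y : {set T}, Y \subset X -> sub_qcs Y -> Y = set0 \/ Y = X.

(* X (a q-cycle set, hence nonempty) is indecomposable: no partition of X
   into two nonempty sub-q-cycle sets *)
Definition qcs_indecomposable (X : {set T}) : Prop :=
  X != set0 /\
  ~ (exists Y Z : {set T},
       [/\ (Y != set0) && (Z != set0), sub_qcs Y, sub_qcs Z,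
           Y :|: Z = X & Y :&: Z = set0]).

End QCycleSet.

(* Main.v *)
Require Import Defs.
From mathcomp Require Import all_boot.
Set Implicit Arguments. Unset Strict Implicit. Unset Printing Implicit Defensive.


Lemma imset_closed (T : finType) (f : T -> T) (Y : {set T}) :
  {in Y &, injective f} -> (forall v, v \in Y -> f v \in Y) -> f @: Y = Y.
Proof.
move=> inj cl; apply/eqP; rewrite eqEcard card_in_imset // leqnn andbT.
by apply/subsetP => _ /imsetP[v hv ->]; exact: cl.
Qed.

Lemma inj_closed_iff (T : finType) (f : T -> T) (Y : {set T}) :
  injective f -> (forall v, v \in Y -> f v \in Y) -> forall v, (f v \in Y) = (v \in Y).
Proof.
move=> inj cl v; rewrite -{1}(imset_closed (in2W inj) cl) mem_imset //.
Qed.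

Lemma qcs_cl (T : finType) (dot colon : T -> T -> T) (X : {set T}) u v :
  sub_qcs dot colon X -> u \in X -> v \in X -> (dot u v \in X) && (colon u v \in X).
Proof. by case/and4P=> /forall_inP H _ _ _ /H /forall_inP; apply. Qed.

Lemma sub_qcs_sub (T : finType) (dot colon : T -> T -> T) (X W : {set T}) :
  sub_qcs dot colon X -> W \subset X ->
  (forall u v, u \in W -> v \in W -> (dot u v \in W) && (colon u v \in W)) ->
  sub_qcs dot colon W.
Proof.
move=> HX sWX Hcl; move: (HX) => /and4P[_ /forall_inP Hinj _ /forall_inP Hid].
have sub := subsetP sWX.
apply/and4P; split.
- apply/forall_inP => u uW; apply/forall_inP => v vW; exact: Hcl.
- apply/forall_inP => u uW; apply/forall_inP => v vW; apply/forall_inP => w wW.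
  move: (Hinj u (sub u uW)) => /forall_inP /(_ v (sub v vW)) /forall_inP; apply.
  exact: sub.
- apply/forall_inP => u uW; apply/forall_inP => v vW.
  have inj : {in W &, injective (dot u)}.
    move=> a b aW bW /eqP; move: (Hinj u (sub u uW)) => /forall_inP /(_ a (sub a aW)).
    by move=> /forall_inP /(_ b (sub b bW)) /implyP H /H /eqP.
  have cl : forall a, a \in W -> dot u a \in W by move=> a aW; case/andP: (Hcl u a uW aW).
  have : v \in dot u @: W by rewrite (imset_closed inj cl).
  case/imsetP => a aW ->.
  by apply/exists_inP; exists a.

- apply/forall_inP => u uW; apply/forall_inP => v vW; apply/forall_inP => w wW.
  move: (Hid u (sub u uW)) => /forall_inP /(_ v (sub v vW)) /forall_inP; apply.
  exact: sub.
Qed.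

Section Alg.
Variables (T : finType) (B : brace_ops T).
Hypothesis HB : is_skew_brace B.

Local Notation add := (badd B).
Local Notation opp := (bopp B).
Local Notation z := (bzero B).
Local Notation circ := (bcirc B).
Local Notation inv := (binv B).
Local Notation one := (bone B).
Local Notation lam := (blambda B).
Local Notation del := (bdelta B).

Lemma addA : associative add. Proof. by case: HB => [[]]. Qed.
Lemma add0r a : add z a = a. Proof. by case: HB => [[]]. Qed.
Lemma addr0 a : add a z = a. Proof. by case: HB => [[]]. Qed.
Lemma addNr a : add (opp a) a = z. Proof. by case: HB => [[]]. Qed.
Lemma addrN a : add a (opp a) = z. Proof. by case: HB => [[]]. Qed.
Lemma circA : associative circ. Proof. by case: HB => _ [] . Qed.
Lemma circ1r a : circ one a = a. Proof. by case: HB => _ []. Qed.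
Lemma circr1 a : circ a one = a. Proof. by case: HB => _ []. Qed.
Lemma circVr a : circ (inv a) a = one. Proof. by case: HB => _ []. Qed.
Lemma circrV a : circ a (inv a) = one. Proof. by case: HB => _ []. Qed.
Lemma circD a b c : circ a (add b c) = add (add (circ a b) (opp a)) (circ a c).
Proof. by case: HB. Qed.

Lemma addKr a b : add (opp a) (add a b) = b. Proof. by rewrite addA addNr add0r. Qed.
Lemma addNKr a b : add a (add (opp a) b) = b. Proof. by rewrite addA addrN add0r. Qed.
Lemma addrK a b : add (add b a) (opp a) = b. Proof. by rewrite -addA addrN addr0. Qed.
Lemma addrNK a b : add (add b (opp a)) a = b. Proof. by rewrite -addA addNr addr0. Qed.
Lemma add_inj a : injective (add a).
Proof. by move=> b c H; rewrite -(addKr a b) H addKr. Qed.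
Lemma add_injr a : injective (fun b => add b a).
Proof. by move=> b c /= H; rewrite -(addrK a b) H addrK. Qed.
Lemma oppK a : opp (opp a) = a.
Proof. by apply: (@add_inj (opp a)); rewrite addrN addNr. Qed.
Lemma opp_add a b : opp (add a b) = add (opp b) (opp a).
Proof. by apply: (@add_inj (add a b)); rewrite addrN addA addrK addrN. Qed.
Lemma circKr a b : circ (inv a) (circ a b) = b. Proof. by rewrite circA circVr circ1r. Qed.
Lemma circ_inj a : injective (circ a).
Proof. by move=> b c H; rewrite -(circKr a b) H circKr. Qed.
Lemma invK a : inv (inv a) = a.
Proof. by apply: (@circ_inj (inv a)); rewrite circrV circVr. Qed.

Lemma circ_z a : circ a z = a.
Proof.
have H := circD a z z; rewrite addr0 -addA in H.
have H2 : add (circ a z) z = add (circ a z) (add (opp a) (circ a z)).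
  rewrite addr0. exact H.
by rewrite -(addNKr a (circ a z)) -(add_inj H2) addr0.
Qed.
Lemma one_z : one = z. Proof. by rewrite -(circ_z one) circ1r. Qed.
Lemma opp_z : opp z = z. Proof. by rewrite -[opp z]addr0 addNr. Qed.

Lemma circ_opp a v : circ a (opp v) = add (add a (opp (circ a v))) a.
Proof.
have := circD a v (opp v); rewrite addrN circ_z => H.
by rewrite -(addKr (add (circ a v) (opp a)) (circ a (opp v))) -H opp_add oppK.
Qed.

Lemma lamE a b : lam a b = add (opp a) (circ a b). Proof. by []. Qed.
Lemma delE a b : del a b = add (circ a b) (opp a). Proof. by []. Qed.

Lemma lamD a u v : lam a (add u v) = add (lam a u) (lam a v).
Proof. by rewrite !lamE circD !addA. Qed.
Lemma lam0 a : lam a z = z. Proof. by rewrite lamE circ_z addNr. Qed.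
Lemma lamN a u : lam a (opp u) = opp (lam a u).
Proof. by rewrite !lamE circ_opp opp_add oppK !addA addNr add0r. Qed.
Lemma lamM a b c : lam (circ a b) c = lam a (lam b c).
Proof.
rewrite !lamE circD circ_opp circA !addA addNr add0r.
by rewrite addrK.
Qed.
Lemma lam1 b : lam one b = b. Proof. by rewrite lamE circ1r one_z opp_z add0r. Qed.
Lemma lamK a b : lam a (lam (inv a) b) = b. Proof. by rewrite -lamM circrV lam1. Qed.
Lemma lamKV a b : lam (inv a) (lam a b) = b. Proof. by rewrite -lamM circVr lam1. Qed.
Lemma lam_inj a : injective (lam a).
Proof. by move=> b c H; rewrite -(lamKV a b) H lamKV. Qed.

Lemma delM a b c : del (circ a b) c = del a (del b c).
Proof.
rewrite !delE circD circ_opp circA !addA.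
by rewrite addrK addrNK.
Qed.
Lemma del1 b : del one b = b. Proof. by rewrite delE circ1r one_z opp_z addr0. Qed.
Lemma delK a b : del a (del (inv a) b) = b. Proof. by rewrite -delM circrV del1. Qed.
Lemma delKV a b : del (inv a) (del a b) = b. Proof. by rewrite -delM circVr del1. Qed.
Lemma del_inj a : injective (del a).
Proof. by move=> b c H; rewrite -(delKV a b) H delKV. Qed.

Lemma circE a b : circ a b = add a (lam a b). Proof. by rewrite lamE addNKr. Qed.
Lemma addE a b : add a b = circ a (lam (inv a) b).
Proof. by rewrite circE lamK. Qed.
Lemma invE a : inv a = lam (inv a) (opp a).
Proof. by rewrite lamN lamE circVr one_z addr0 oppK. Qed.


Definition Cset (Y : {set T}) : {set T} :=
  [set c | [forall v, (lam c v \in Y) == (v \in Y)] &&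
           [forall v, (del c v \in Y) == (v \in Y)]].

Lemma CsetP (Y : {set T}) c : reflect ((forall v, (lam c v \in Y) = (v \in Y)) /\
                           (forall v, (del c v \in Y) = (v \in Y))) (c \in Cset Y).
Proof.
rewrite inE; apply: (iffP andP) => [[/forallP H1 /forallP H2]|[H1 H2]].
  by split => v; apply/eqP; [exact: H1 | exact: H2].
by split; apply/forallP => v; apply/eqP; [exact: H1 | exact: H2].
Qed.

Lemma Cset_M (Y : {set T}) c d : c \in Cset Y -> d \in Cset Y -> circ c d \in Cset Y.
Proof.
move=> /CsetP[h1 h2] /CsetP[k1 k2]; apply/CsetP; split => v.
  by rewrite lamM h1 k1.
by rewrite delM h2 k2.
Qed.

Lemma Cset_V (Y : {set T}) c : c \in Cset Y -> inv c \in Cset Y.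
Proof.
move=> /CsetP[h1 h2]; apply/CsetP; split => v.
  by rewrite -h1 lamK.
by rewrite -h2 delK.
Qed.

Lemma Cset_1 (Y : {set T}) : one \in Cset Y.
Proof. by apply/CsetP; split => v; rewrite ?lam1 ?del1. Qed.

Definition qclosed (Y : {set T}) := forall u v, u \in Y -> v \in Y ->
  (bdot B u v \in Y) && (bcolon B u v \in Y).

Lemma inv_in_Cset (Y : {set T}) y : qclosed Y -> y \in Y -> inv y \in Cset Y.
Proof.
move=> cl hy; apply/CsetP; split; apply: inj_closed_iff.
- exact: lam_inj.
- by move=> v hv; case/andP: (cl y v hy hv).
- exact: del_inj.
- by move=> v hv; case/andP: (cl y v hy hv).
Qed.

Lemma Y_in_Cset (Y : {set T}) y : qclosed Y -> y \in Y -> y \in Cset Y.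
Proof. by move=> cl hy; rewrite -(invK y); apply: Cset_V; apply: inv_in_Cset. Qed.

Definition Gset (Y : {set T}) : {set T} :=
  [set g | [forall c in Cset Y, add c g \in Cset Y]].

Lemma addsgP (S : {set T}) : add_subgroup B S ->
  [/\ z \in S, forall a b, a \in S -> b \in S -> add a b \in S &
      forall a, a \in S -> opp a \in S].
Proof.
case/and3P => h0 /forall_inP ha /forall_inP hn; split => // a b /ha /forall_inP; apply.
Qed.

Lemma circsgP (S : {set T}) : circ_subgroup B S ->
  [/\ one \in S, forall a b, a \in S -> b \in S -> circ a b \in S &
      forall a, a \in S -> inv a \in S].
Proof.
case/and3P => h0 /forall_inP ha /forall_inP hn; split => // a b /ha /forall_inP; apply.
Qed.

Lemma addsgI (S : {set T}) : z \in S -> (forall a b, a \in S -> b \in S -> add a b \in S) ->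
  (forall a, a \in S -> opp a \in S) -> add_subgroup B S.
Proof.
move=> h0 ha hn; apply/and3P; split => //.
  by apply/forall_inP => a hA; apply/forall_inP => b hb; apply: ha.
by apply/forall_inP.
Qed.

Lemma circsgI (S : {set T}) : one \in S -> (forall a b, a \in S -> b \in S -> circ a b \in S) ->
  (forall a, a \in S -> inv a \in S) -> circ_subgroup B S.
Proof.
move=> h0 ha hn; apply/and3P; split => //.
  by apply/forall_inP => a hA; apply/forall_inP => b hb; apply: ha.
by apply/forall_inP.
Qed.

Lemma Gset_sg (Y : {set T}) : add_subgroup B (Gset Y).
Proof.
apply: addsgI.
- by rewrite inE; apply/forall_inP => c hc; rewrite addr0.
- move=> a b; rewrite !inE => /forall_inP ha /forall_inP hb.
  by apply/forall_inP => c hc; rewrite addA; apply: hb; apply: ha.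
- move=> g; rewrite !inE => /forall_inP hg; apply/forall_inP => c hc.
  have := @inj_closed_iff _ (fun c => add c g) (Cset Y) (@add_injr g) hg (add c (opp g)).
  by rewrite /= addrNK hc => <-.
Qed.

Lemma Y_sub_G (Y : {set T}) : qclosed Y -> Y \subset Gset Y.
Proof.
move=> cl; apply/subsetP => y hy; rewrite inE; apply/forall_inP => c hc.
rewrite addE; apply: Cset_M => //; apply: Y_in_Cset => //.
by rewrite ((CsetP _ _ (Cset_V hc)).1).
Qed.

Lemma add_gen_min (S X : {set T}) : add_subgroup B S -> X \subset S -> add_gen B X \subset S.
Proof. by move=> h1 h2; apply: bigcap_inf; rewrite h1 h2. Qed.

Lemma add_gen_sup (X : {set T}) : X \subset add_gen B X.
Proof. by apply/bigcapsP => S /andP[_ ->]. Qed.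

Lemma add_gen_sg (X : {set T}) : add_subgroup B (add_gen B X).
Proof.
apply: addsgI.
- by apply/bigcapP => S /andP[/addsgP[]].
- move=> a b /bigcapP ha /bigcapP hb; apply/bigcapP => S hS.
  have [_ H _] := addsgP (andP hS).1; exact: H (ha S hS) (hb S hS).
- move=> a /bigcapP ha; apply/bigcapP => S hS.
  have [_ _ H] := addsgP (andP hS).1; exact: H (ha S hS).
Qed.

Lemma A_sub_C (Y : {set T}) : qclosed Y -> add_gen B Y \subset Cset Y.
Proof.
move=> cl; apply/subsetP => a ha.
have : a \in Gset Y by apply: (subsetP (add_gen_min (Gset_sg Y) (Y_sub_G cl))).
rewrite inE => /forall_inP /(_ z); rewrite add0r; apply; rewrite -one_z; exact: Cset_1.
Qed.

Lemma lam_A (Y : {set T}) c u : c \in Cset Y -> u \in add_gen B Y -> lam c u \in add_gen B Y.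
Proof.
move=> hc hu.
have [h0 hD hN] := addsgP (add_gen_sg Y).
have : u \in [set u | lam c u \in add_gen B Y]; last by rewrite inE.
apply: (subsetP (add_gen_min _ _)) hu.
  apply: addsgI; rewrite ?inE ?lam0 //.
    by move=> a b; rewrite !inE lamD; apply: hD.
  by move=> a; rewrite !inE lamN; apply: hN.
apply/subsetP => y hy; rewrite inE; apply: (subsetP (add_gen_sup Y)); by rewrite ((CsetP _ _ hc).1).
Qed.

Lemma A_sb (Y : {set T}) : qclosed Y -> sub_skew_brace B (add_gen B Y).
Proof.
move=> cl; have [h0 hD hN] := addsgP (add_gen_sg Y).
have sAC := subsetP (A_sub_C cl).
apply/andP; split; first exact: add_gen_sg.
apply: circsgI.
- by rewrite one_z.
- by move=> a b ha hb; rewrite circE; apply: hD => //; apply: lam_A => //; apply: sAC.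
- move=> a ha; rewrite invE; apply: lam_A; last exact: hN.
  by apply: Cset_V; apply: sAC.
Qed.

Lemma brace_gen_min (S : {set T}) x : sub_skew_brace B S -> x \in S -> brace_gen B x \subset S.
Proof. by move=> h1 h2; apply: bigcap_inf; rewrite h1 h2. Qed.

Lemma brace_gen_in x : x \in brace_gen B x.
Proof. by apply/bigcapP => S /andP[_ ->]. Qed.

Lemma brace_gen_sb x : sub_skew_brace B (brace_gen B x).
Proof.
apply/andP; split; [apply: addsgI | apply: circsgI].
- by apply/bigcapP => S /andP[/andP[/addsgP[] ]].
- move=> a b /bigcapP ha /bigcapP hb; apply/bigcapP => S hS.
  have [_ H _] := addsgP (andP (andP hS).1).1; exact: H (ha S hS) (hb S hS).
- move=> a /bigcapP ha; apply/bigcapP => S hS.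
  have [_ _ H] := addsgP (andP (andP hS).1).1; exact: H (ha S hS).
- by apply/bigcapP => S /andP[/andP[_ /circsgP[] ]].
- move=> a b /bigcapP ha /bigcapP hb; apply/bigcapP => S hS.
  have [_ H _] := circsgP (andP (andP hS).1).2; exact: H (ha S hS) (hb S hS).
- move=> a /bigcapP ha; apply/bigcapP => S hS.
  have [_ _ H] := circsgP (andP (andP hS).1).2; exact: H (ha S hS).
Qed.

Lemma orbit_sub x (Y : {set T}) : (forall c, c \in Cset Y) -> x \in Y -> ld_orbit B x \subset Y.
Proof.
move=> hC hx; apply/subsetP => y; rewrite inE => hxy.
have cl : closed (ld_step B) (mem Y).
  move=> u v /existsP[a /or4P[] /eqP <-].
  - by rewrite (CsetP _ _ (hC a)).1.
  - by rewrite (CsetP _ _ (hC a)).2.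
  - by rewrite (CsetP _ _ (hC a)).1.
  - by rewrite (CsetP _ _ (hC a)).2.
by rewrite -(closed_connect cl hxy).
Qed.

Lemma X_sub_orbit X x : sub_qcs (bdot B) (bcolon B) X ->
  qcs_indecomposable (bdot B) (bcolon B) X -> x \in X -> X \subset ld_orbit B x.
Proof.
move=> HX [_ Hnd] hx; apply/subsetP => y hy; apply/negPn/negP => hyO.
apply: Hnd; exists (X :&: ld_orbit B x), (X :\: ld_orbit B x); split.
- apply/andP; split; apply/set0Pn.
    by exists x; rewrite !inE hx connect0.
  by exists y; rewrite inE hy andbT hyO.
- apply: (sub_qcs_sub HX (subsetIl _ _)) => u v; rewrite !inE => /andP[hu hou] /andP[hv hov].
  case/andP: (qcs_cl HX hu hv) => -> ->; rewrite /=.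
  apply/andP; split; apply: (connect_trans hov); apply: connect1; apply/existsP; exists (inv u);
    by rewrite eqxx ?orbT.
- apply: (sub_qcs_sub HX (subsetDl _ _)) => u v; rewrite !inE => /andP[hou hu] /andP[hov hv].
  case/andP: (qcs_cl HX hu hv) => -> ->; rewrite /= !andbT.
  apply/andP; split; apply/negP => hc; move/negP: hov; apply; apply: (connect_trans hc);
    apply: connect1; apply/existsP; exists (inv u); by rewrite eqxx ?orbT.
- exact: setID.
- apply/setP => w; rewrite !inE; by case: (w \in X); case: (connect _ x w).
Qed.

Lemma qcs_gen_facts X x : sub_qcs (bdot B) (bcolon B) X -> x \in X ->
  let Y := qcs_gen (bdot B) (bcolon B) [set x] in
  [/\ Y \subset X, x \in Y, qclosed Y & sub_qcs (bdot B) (bcolon B) Y].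
Proof.
move=> HX hx Y.
have hYX : Y \subset X by apply: bigcap_inf; rewrite HX sub1set hx.
have hcl : qclosed Y.
  move=> u v /bigcapP hu /bigcapP hv; apply/andP; split; apply/bigcapP => W hW;
  case/andP: (qcs_cl (andP hW).1 (hu W hW) (hv W hW)) => //.
split => //.
- by apply/bigcapP => W /andP[_]; rewrite sub1set.
- exact: sub_qcs_sub HX hYX hcl.
Qed.

Lemma part1 X x : sub_qcs (bdot B) (bcolon B) X ->
  qcs_indecomposable (bdot B) (bcolon B) X -> x \in X ->
  (brace_gen B x = setT <->
      transitive_cycle_base B X /\ qcs_gen (bdot B) (bcolon B) [set x] = X).
Proof.
move=> HX Hind hx.
have [hYX hxY hcl hYq] := qcs_gen_facts HX hx.
set Y := qcs_gen _ _ _ in hYX hxY hcl hYq *.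
split.
- move=> hB.
  have hA : add_gen B Y = setT.
    apply/eqP; rewrite eqEsubset subsetT /= -hB.
    by apply: brace_gen_min (A_sb hcl) _; apply: (subsetP (add_gen_sup Y)).
  have hC : forall c, c \in Cset Y by move=> c; apply: (subsetP (A_sub_C hcl)); rewrite hA inE.
  have hOY := orbit_sub hC hxY.
  have hXO := X_sub_orbit HX Hind hx.
  have eYX : Y = X by apply/eqP; rewrite eqEsubset hYX (subset_trans hXO hOY).
  split => //; split; last by rewrite -eYX.
  by exists x; apply/eqP; rewrite eqEsubset hXO -eYX hOY.
- case=> [[_ hAX] eYX]; apply/eqP; rewrite eqEsubset subsetT /= -hAX.
  have [h0 hD hN] := addsgP (andP (brace_gen_sb x)).1.
  have [h1 hM hI] := circsgP (andP (brace_gen_sb x)).2.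
  apply: add_gen_min; first exact: (andP (brace_gen_sb x)).1.
  rewrite -eYX.
  apply: (subset_trans _ (subsetIl _ X)); apply: bigcap_inf.
  rewrite sub1set inE brace_gen_in hx andbT andbT.
  apply: (sub_qcs_sub HX (subsetIr _ _)) => u v; rewrite !inE => /andP[hu hux] /andP[hv hvx].
  case/andP: (qcs_cl HX hux hvx) => -> ->; rewrite !andbT.
  apply/andP; split; rewrite /bdot /bcolon /blambda /bdelta.
    by apply: hD; [apply: hN; apply: hI | apply: hM => //; apply: hI].
  by apply: hD; [apply: hM => //; apply: hI | apply: hN; apply: hI].
Qed.

End Alg.

Theorem mainTheorem1 (T : finType) (B : brace_ops T)
  (HB : is_skew_brace B) (X : {set T})
  (HX : sub_qcs (bdot B) (bcolon B) X)
  (Hind : qcs_indecomposable (bdot B) (bcolon B) X) :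
  (forall x, x \in X ->
     (brace_gen B x = setT <->
      transitive_cycle_base B X /\ qcs_gen (bdot B) (bcolon B) [set x] = X))
  /\
  ((forall x, x \in X -> brace_gen B x = setT) <->
   transitive_cycle_base B X /\ qcs_irreducible (bdot B) (bcolon B) X).
Proof.
have P1 := fun x => @part1 T B HB X x HX Hind.
split => //; split.
- move=> hall; have [hne _] := Hind.
  have [x hx] := set0Pn _ hne.
  have [htcb _] := (P1 x hx).1 (hall x hx).
  split => //; split => // W hWX hW.
  case/boolP: (W == set0) => [/eqP -> | /set0Pn [w hw]]; [by left | right].
  have hwX := subsetP hWX w hw.
  have [_ eX] := (P1 w hwX).1 (hall w hwX).
  apply/eqP; rewrite eqEsubset hWX -eX /=.
  by apply: bigcap_inf; rewrite hW sub1set hw.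
- case=> htcb [hne hirr] x hx; apply: (P1 x hx).2; split => //.
  have [hYX hxY _ hYq] := qcs_gen_facts HX hx.
  case: (hirr _ hYX hYq) => // h0.
  by move: hxY; rewrite h0 inE.
Qed.
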